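(* Let $(A,* )$ be an involutive associative algebra, $(M,* )$ an involutive $A$-bimodule, and $T:M\to A$ a relative Rota-Baxter operator on $A$ with respect to $M$. Then $H^\bullet_T(M,A)\cong iH^\bullet_T(M,A)\oplus i_-H^\bullet_T(M,A)$, where these are the cohomologies of the complexes $(\mathrm{Hom}(M^{\otimes\bullet},A),d_T)$, $(i\mathrm{Hom}(M^{\otimes\bullet},A),d_T)$ and $(i_-\mathrm{Hom}(M^{\otimes\bullet},A),d_T)$ respectively.
   Context: An involutive associative algebra is an associative algebra $A$ with a linear map $*:A\to A$ satisfying $a^{**}=a$ and $(ab)^*=b^*a^*$; an involutive $A$-bimodule is an $A$-bimodule $M$ with $*:M\to M$, $u^{**}=u$, $(au)^*=u^*a^*$, $(ua)^*=a^*u^*$. A relative Rota-Baxter operator is a linear $T:M\to A$ with $T(u^* )=T(u)^*$ and $T(u)T(v)=T(uT(v)+T(u)v)$. Put $u\circledast v=uT(v)+T(u)v$, $l_T(u,a)=T(u)a-T(ua)$, $r_T(a,u)=aT(u)-T(au)$. Let $\mathrm{Hom}(M^{\otimes 0},A)=A$. The differential $d_T:\mathrm{Hom}(M^{\otimes n},A)\to \mathrm{Hom}(M^{\otimes n+1},A)$ is $d_T(a)(u)=l_T(u,a)-r_T(a,u)$ for $a\in A$, and for $n\ge1$, $(d_Tf)(u_1,\ldots,u_{n+1})=(-1)^n\big[l_T(u_1,f(u_2,\ldots,u_{n+1}))+\sum_{i=1}^n(-1)^if(u_1,\ldots,u_i\circledast u_{i+1},\ldots,u_{n+1})+(-1)^{n+1}r_T(f(u_1,\ldots,u_n),u_{n+1})\big]$;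 $H^\bullet_T(M,A)$ is its cohomology. Define $S_0(a)=-a^*$ and $(S_nf)(u_1,\ldots,u_n)=(-1)^{\frac{(n-1)(n-2)}{2}}f(u_n^*,\ldots,u_1^* )^*$ for $n\ge1$; then $S_n^2=\mathrm{id}$. Let $i\mathrm{Hom}(M^{\otimes n},A)$ and $i_-\mathrm{Hom}(M^{\otimes n},A)$ be the $+1$ and $-1$ eigenspaces of $S_n$ (so $i\mathrm{Hom}(M^{\otimes 0},A)=\{a\mid a^*=-a\}$). Both are subcomplexes for $d_T$; their cohomologies are $iH^\bullet_T(M,A)$ and $i_-H^\bullet_T(M,A)$. *)

(* Defs.v *)
From mathcomp Require Import all_boot all_algebra.
Set Implicit Arguments. Unset Strict Implicit. Unset Printing Implicit Defensive.
Import GRing.Theory.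
Local Open Scope ring_scope.

Section InvolutiveRB.
Variable K : fieldType.
Variables A M : lmodType K.

Definition linear_map (U V : lmodType K) (f : U -> V) :=
  forall (a : K) x y, f (a *: x + y) = a *: f x + f y.

Definition bilinear_op (U V W : lmodType K) (op : U -> V -> W) :=
  (forall (a : K) x y z, op (a *: x + y) z = a *: op x z + op y z) /\
  (forall (a : K) x y z, op z (a *: x + y) = a *: op z x + op z y).

Definition involutive_assoc_algebra (mul : A -> A -> A) (st : A -> A) :=
  bilinear_op mul /\
  (forall a b c, mul (mul a b) c = mul a (mul b c)) /\
  linear_map st /\
  (forall a, st (st a) = a) /\
  (forall a b, st (mul a b) = mul (st b) (st a)).

Definition involutive_bimodule (mul : A -> A -> A) (st : A -> A)
    (lact : A -> M -> M) (ract : M -> A -> M) (stM : M -> M) :=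
  bilinear_op lact /\ bilinear_op ract /\
  (forall a b u, lact (mul a b) u = lact a (lact b u)) /\
  (forall u a b, ract u (mul a b) = ract (ract u a) b) /\
  (forall a u b, ract (lact a u) b = lact a (ract u b)) /\
  linear_map stM /\
  (forall u, stM (stM u) = u) /\
  (forall a u, stM (lact a u) = ract (stM u) (st a)) /\
  (forall u a, stM (ract u a) = lact (st a) (stM u)).

Definition rel_RB_operator (mul : A -> A -> A) (st : A -> A)
    (lact : A -> M -> M) (ract : M -> A -> M) (stM : M -> M) (T : M -> A) :=
  linear_map T /\
  (forall u, T (stM u) = st (T u)) /\
  (forall u v, mul (T u) (T v) = T (ract u (T v) + lact (T u) v)).

(** n-cochains: maps M^n -> A (arguments indexed by 'I_n); the genuine
    elements of Hom(M^{(x)n}, A) are the multilinear ones.  For n = 0,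
    ('I_0 -> M) -> A is (up to funext) just A. *)
Definition cochain n := ('I_n -> M) -> A.

Definition upd n (u : 'I_n -> M) (i : 'I_n) (x : M) : 'I_n -> M :=
  fun j => if j == i then x else u j.

Definition multilinear n (f : cochain n) :=
  forall (u : 'I_n -> M) (i : 'I_n) (a : K) (x y : M),
    f (upd u i (a *: x + y)) = a *: f (upd u i x) + f (upd u i y).

Section Differential.
Variables (mul : A -> A -> A) (lact : A -> M -> M) (ract : M -> A -> M)
  (T : M -> A).

Definition lT (u : M) (a : A) : A := mul (T u) a - T (ract u a).
Definition rT (a : A) (u : M) : A := mul a (T u) - T (lact a u).
Definition circ (u v : M) : M := ract u (T v) + lact (T u) v.

(** (u_1, ..., u_{k} * u_{k+1}, ..., u_{n+1}) with 0-based merge position k. *)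
Definition merge n (k : 'I_n) (u : 'I_n.+1 -> M) : 'I_n -> M :=
  fun i => if (i < k)%N then u (widen_ord (leqnSn n) i)
           else if i == k then circ (u (widen_ord (leqnSn n) i)) (u (lift ord0 i))
           else u (lift ord0 i).

(** d_T : Hom(M^n, A) -> Hom(M^{n+1}, A).  For n = 0 this reduces to
    d_T(a)(u) = l_T(u,a) - r_T(a,u). *)
Definition dT n (f : cochain n) : cochain n.+1 := fun u =>
  (-1) ^+ n *:
    ( lT (u ord0) (f (fun i => u (lift ord0 i)))
    + \sum_(k < n) (-1) ^+ k.+1 *: f (merge k u)
    + (-1) ^+ n.+1 *: rT (f (fun i => u (widen_ord (leqnSn n) i))) (u ord_max) ).
End Differential.

Section Involution.
Variables (st : A -> A) (stM : M -> M).

(** S_0(a) = -star(a);  S_n f (u_1..u_n) = (-1)^{(n-1)(n-2)/2} star(f(star u_n,..,star u_1)). *)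
Definition sgnS n : K :=
  match n with 0 => - 1 | _ => (-1) ^+ ((n.-1 * n.-2) %/ 2) end.

Definition Sop n (f : cochain n) : cochain n := fun u =>
  sgnS n *: st (f (fun i => stM (u (rev_ord i)))).
End Involution.

Definition HomP n (f : cochain n) := multilinear f.
Definition iHomP st stM n (f : cochain n) :=
  multilinear f /\ Sop st stM f = f.
Definition imHomP st stM n (f : cochain n) :=
  multilinear f /\ Sop st stM f = (fun u => - f u).

Section Cohomology.
Variables (mul : A -> A -> A) (lact : A -> M -> M) (ract : M -> A -> M)
  (T : M -> A).
Variable P : forall n, cochain n -> Prop.

Definition cocycle n (f : cochain n) :=
  P f /\ dT mul lact ract T f = (fun _ => 0).

Definition coboundary n : cochain n -> Prop :=
  match n return cochain n -> Prop with
  | 0 => fun f => f = (fun _ => 0)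
  | m.+1 => fun f => exists g : cochain m, P g /\ dT mul lact ract T g = f
  end.
End Cohomology.

(** H^n_P  ~=  H^n_Q (+) H^n_R  as K-vector spaces, where H^n_X = Z^n_X / B^n_X. *)
Definition cohomology_iso_sum mul lact ract T
    (P Q R : forall n, cochain n -> Prop) n :=
  let Z X := @cocycle mul lact ract T X n in
  let B X := @coboundary mul lact ract T X n in
  exists Phi : cochain n -> cochain n * cochain n,
    (forall (a : K) f g, Z P f -> Z P g ->
       Phi (fun u => a *: f u + g u) =
       ((fun u => a *: (Phi f).1 u + (Phi g).1 u),
        (fun u => a *: (Phi f).2 u + (Phi g).2 u))) /\
    (forall f, Z P f -> Z Q (Phi f).1 /\ Z R (Phi f).2) /\
    (forall f, Z P f -> (B P f <-> B Q (Phi f).1 /\ B R (Phi f).2)) /\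
    (forall g h, Z Q g -> Z R h ->
       exists f, Z P f /\ B Q (fun u => (Phi f).1 u - g u)
                       /\ B R (fun u => (Phi f).2 u - h u)).

End InvolutiveRB.

(* Main.v *)
Require Import Defs.
From mathcomp Require Import all_boot all_algebra zify ring.
From Stdlib Require Import FunctionalExtensionality.
Import GRing.Theory.
Local Open Scope ring_scope.

Lemma lm0 {K : fieldType} {U V : lmodType K} {f : U -> V} :
  linear_map f -> f 0 = 0.
Proof.
move=> h; have := h 1 0 0; rewrite !scale1r addr0 => /eqP.
move=> /eqP e; apply: (addrI (f 0)); by rewrite addr0 -e.
Qed.

Lemma lmD {K : fieldType} {U V : lmodType K} {f : U -> V} :
  linear_map f -> forall x y, f (x + y) = f x + f y.
Proof. by move=> h x y; rewrite -[x in LHS]scale1r h scale1r. Qed.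

Lemma lmZ {K : fieldType} {U V : lmodType K} {f : U -> V} :
  linear_map f -> forall a x, f (a *: x) = a *: f x.
Proof. by move=> h a x; rewrite -[a *: x]addr0 h (lm0 h) addr0. Qed.

Lemma lmN {K : fieldType} {U V : lmodType K} {f : U -> V} :
  linear_map f -> forall x, f (- x) = - f x.
Proof. by move=> h x; rewrite -scaleN1r (lmZ h) scaleN1r. Qed.

Lemma lmB {K : fieldType} {U V : lmodType K} {f : U -> V} :
  linear_map f -> forall x y, f (x - y) = f x - f y.
Proof. by move=> h x y; rewrite (lmD h) (lmN h). Qed.

Lemma lmsum {K : fieldType} {U V : lmodType K} {f : U -> V} :
  linear_map f -> forall n (F : 'I_n -> U), f (\sum_(i < n) F i) = \sum_(i < n) f (F i).
Proof.
move=> h n F; apply: (big_ind2 (fun x y => f x = y)) => //; first by rewrite (lm0 h).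
by move=> x1 x2 y1 y2 <- <-; rewrite (lmD h).
Qed.

Lemma bl1 {K : fieldType} {U V W : lmodType K} {op : U -> V -> W} :
  bilinear_op op -> forall z, linear_map (op^~ z).
Proof. by move=> [h _] z a x y; apply: h. Qed.

Lemma bl2 {K : fieldType} {U V W : lmodType K} {op : U -> V -> W} :
  bilinear_op op -> forall z, linear_map (op z).
Proof. by move=> [_ h] z a x y; apply: h. Qed.

Lemma lin_comb {K : fieldType} {U V : lmodType K} {f : U -> V} :
  linear_map f -> forall a b x y, f (a *: x + b *: y) = a *: f x + b *: f y.
Proof. by move=> h a b x y; rewrite h (lmZ h). Qed.

Lemma sign_sq (K : fieldType) k : ((-1 : K) ^+ k) * ((-1) ^+ k) = 1.
Proof. by rewrite -exprMn mulrNN mulr1 expr1n. Qed.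

Lemma sgnS_sq (K : fieldType) n : sgnS K n * sgnS K n = 1.
Proof. by case: n => [|n] /=; rewrite ?mulrNN ?mulr1 ?sign_sq. Qed.

Lemma sgnS_succ (K : fieldType) n : sgnS K n.+1 = (-1) ^+ n.+1 * sgnS K n.
Proof.
case: n => [|m] /=; first by rewrite mul0n div0n expr0 expr1 mulrNN mulr1.
have -> : (m.+1 * m = m * m.-1 + m * 2)%N by case: m => //= m; lia.
idtac.
rewrite divnDr ?dvdn_mull // mulnK // exprD !exprS -mulrA mulrC.
by rewrite !mulrA mulrNN !mulr1 mul1r.
Qed.
Lemma lT_lin {K : fieldType} {A M : lmodType K} (mul : A -> A -> A)
  (ract : M -> A -> M) (T : M -> A) :
  bilinear_op mul -> bilinear_op ract -> linear_map T ->
  forall u, linear_map (lT mul ract T u).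
Proof.
move=> hm hr hT u a x y; rewrite /lT (bl2 hm) (bl2 hr) hT.
by rewrite scalerBr opprD addrACA.
Qed.

Lemma rT_lin {K : fieldType} {A M : lmodType K} (mul : A -> A -> A)
  (lact : A -> M -> M) (T : M -> A) :
  bilinear_op mul -> bilinear_op lact -> linear_map T ->
  forall u, linear_map (fun a => rT mul lact T a u).
Proof.
move=> hm hl hT u a x y; rewrite /rT (bl1 hm) (bl1 hl) hT.
by rewrite scalerBr opprD addrACA.
Qed.

Lemma mod_alg {K : fieldType} {V : lmodType K} (a e : K) (L1 L2 S1 S2 R1 R2 : V) :
  (a *: L1 + L2) + (a *: S1 + S2) + e *: (a *: R1 + R2) =
  a *: (L1 + S1 + e *: R1) + (L2 + S2 + e *: R2).
Proof.
rewrite !scalerDr [e *: (a *: _)]scalerA mulrC -scalerA.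
by rewrite [RHS]addrACA [in RHS](addrACA (a *: L1)).
Qed.

Lemma dT_lin {K : fieldType} {A M : lmodType K} (mul : A -> A -> A)
  (lact : A -> M -> M) (ract : M -> A -> M) (T : M -> A) :
  (forall u, linear_map (lT mul ract T u)) ->
  (forall u, linear_map (fun a => rT mul lact T a u)) ->
  forall n (f g : cochain A M n) (a : K) u,
  dT mul lact ract T (fun v => a *: f v + g v) u =
  a *: dT mul lact ract T f u + dT mul lact ract T g u.
Proof.
move=> hl hr n f g a u; rewrite /dT.
rewrite (hl _ a) (hr _ a).
under eq_bigr => k _ do rewrite scalerDr scalerA mulrC -scalerA.
rewrite big_split /= -scaler_sumr.
rewrite scalerA mulrC -scalerA -scalerDr; congr (_ *: _).
exact: mod_alg.
Qed.

Lemma st_lT {K : fieldType} {A M : lmodType K} (mul : A -> A -> A) (st : A -> A)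
  (lact : A -> M -> M) (ract : M -> A -> M) (stM : M -> M) (T : M -> A) :
  linear_map st -> (forall a b, st (mul a b) = mul (st b) (st a)) ->
  (forall u a, stM (ract u a) = lact (st a) (stM u)) ->
  (forall u, T (stM u) = st (T u)) ->
  forall x a, st (lT mul ract T x a) = rT mul lact T (st a) (stM x).
Proof.
by move=> hst hm hr hT x a; rewrite /lT /rT (lmB hst) hm -!hT hr.
Qed.

Lemma st_rT {K : fieldType} {A M : lmodType K} (mul : A -> A -> A) (st : A -> A)
  (lact : A -> M -> M) (ract : M -> A -> M) (stM : M -> M) (T : M -> A) :
  linear_map st -> (forall a b, st (mul a b) = mul (st b) (st a)) ->
  (forall a u, stM (lact a u) = ract (stM u) (st a)) ->
  (forall u, T (stM u) = st (T u)) ->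
  forall x a, st (rT mul lact T a x) = lT mul ract T (stM x) (st a).
Proof.
by move=> hst hm hl hT x a; rewrite /lT /rT (lmB hst) hm -!hT hl.
Qed.

Lemma stM_circ {K : fieldType} {A M : lmodType K} (st : A -> A)
  (lact : A -> M -> M) (ract : M -> A -> M) (stM : M -> M) (T : M -> A) :
  linear_map stM ->
  (forall a u, stM (lact a u) = ract (stM u) (st a)) ->
  (forall u a, stM (ract u a) = lact (st a) (stM u)) ->
  (forall u, T (stM u) = st (T u)) ->
  forall x y, stM (circ lact ract T x y) = circ lact ract T (stM y) (stM x).
Proof.
by move=> hs hl hr hT x y; rewrite /circ (lmD hs) hl hr -!hT addrC.
Qed.

Lemma merge_rev {K : fieldType} {A M : lmodType K} (st : A -> A)
  (lact : A -> M -> M) (ract : M -> A -> M) (stM : M -> M) (T : M -> A) :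
  linear_map stM ->
  (forall a u, stM (lact a u) = ract (stM u) (st a)) ->
  (forall u a, stM (ract u a) = lact (st a) (stM u)) ->
  (forall u, T (stM u) = st (T u)) ->
  forall n (k : 'I_n) (u : 'I_n.+1 -> M),
  Defs.merge lact ract T (rev_ord k) (fun i => stM (u (rev_ord i))) =
  (fun i => stM (Defs.merge lact ract T k u (rev_ord i))).
Proof.
move=> hs hl hr hT n k u; apply: functional_extensionality => i.
rewrite /Defs.merge.
have Ei : (i == rev_ord k) = (val i == n - k.+1)%N by [].
have Ek : (rev_ord i == k) = (n - i.+1 == val k)%N by [].
rewrite Ei Ek /=.
have ki := ltn_ord k; have ii := ltn_ord i.
case: (ltngtP i (n - k.+1)) => hik.
- have -> : (n - i.+1 < k)%N = false by lia.
  have -> : (n - i.+1 == k)%N = false by lia.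
  by congr (stM (u _)); apply: val_inj; rewrite ?lift0 /= /bump ?leq0n /=; lia.
- have -> : (n - i.+1 < k)%N = true by lia.
  by congr (stM (u _)); apply: val_inj; rewrite ?lift0 /= /bump ?leq0n /=; lia.
- have -> : (n - i.+1 < k)%N = false by lia.
  have -> : (n - i.+1 == k)%N = true by lia.
  rewrite (stM_circ _ _ _ _ _ hs hl hr hT).
  by congr (circ _ _ _ (stM (u _)) (stM (u _))); apply: val_inj; rewrite ?lift0 /= /bump ?leq0n /=; lia.
Qed.

Lemma final_alg {K : fieldType} {V : lmodType K} n (p c E : K) (G H : 'I_n -> K)
  (L R : V) (F : 'I_n -> V) :
  E * E = 1 -> (forall k, H k = E * G k) ->
  p *: (c *: L + \sum_(k < n) G k *: (c *: F k) + E *: (c *: R)) =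
  (E * c) *: (p *: (R + \sum_(k < n) H k *: F k + E *: L)).
Proof.
move=> EE hH.
under [in RHS]eq_bigr => k _ do rewrite hH -scalerA.
under [in LHS]eq_bigr => k _ do rewrite scalerA mulrC -scalerA.
rewrite -!scaler_sumr.
move: (\sum_(k < n) _) => S.
rewrite !scalerDr !scalerA.
rewrite [RHS]addrC [in RHS](addrC (_ *: R)) addrA.
congr (_ *: _ + _ *: _ + _ *: _).
- by rewrite -(mul1r (p * c)) -EE; ring.
- by rewrite -(mul1r (p * c)) -EE; ring.
- by ring.
Qed.

Lemma dT_Sop {K : fieldType} {A M : lmodType K} (mul : A -> A -> A) (st : A -> A)
  (lact : A -> M -> M) (ract : M -> A -> M) (stM : M -> M) (T : M -> A) :
  linear_map st -> (forall a b, st (mul a b) = mul (st b) (st a)) ->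
  linear_map stM -> (forall u, stM (stM u) = u) ->
  (forall a u, stM (lact a u) = ract (stM u) (st a)) ->
  (forall u a, stM (ract u a) = lact (st a) (stM u)) ->
  (forall u, T (stM u) = st (T u)) ->
  (forall u, linear_map (lT mul ract T u)) ->
  (forall u, linear_map (fun a => rT mul lact T a u)) ->
  forall n (f : cochain A M n) u,
  dT mul lact ract T (Sop st stM f) u = Sop st stM (dT mul lact ract T f) u.
Proof.
move=> hst hm hsM hsMK hsl hsr hT hl hr n f u.
rewrite /Sop /dT sgnS_succ.
rewrite (lmZ hst) (lmD hst) (lmD hst) (lmZ hst) (lmsum hst).
rewrite (st_lT _ _ _ _ _ _ hst hm hsr hT) (st_rT _ _ _ _ _ _ hst hm hsl hT) !hsMK.
under [in RHS]eq_bigr => k _ do rewrite (lmZ hst).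
rewrite [in RHS](reindex_inj rev_ord_inj) /=.
under [in RHS]eq_bigr => k _ do rewrite (merge_rev _ _ _ _ _ hsM hsl hsr hT).
rewrite (lmZ (hl _)) (lmZ (hr _)).
have r0 : rev_ord (ord0 : 'I_n.+1) = ord_max by apply: val_inj => /=; lia.
have rm : rev_ord (ord_max : 'I_n.+1) = ord0 by apply: val_inj => /=; lia.
have ft : (fun i : 'I_n => stM (u (rev_ord (lift ord0 i)))) =
          (fun i => stM (u (widen_ord (leqnSn n) (rev_ord i)))).
  apply: functional_extensionality => i; congr (stM (u _)).
  by apply: val_inj; rewrite ?lift0 /= /bump ?leq0n /=; have := ltn_ord i; lia.
have fi : (fun i : 'I_n => stM (u (rev_ord (widen_ord (leqnSn n) i)))) =
          (fun i => stM (u (lift ord0 (rev_ord i)))).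
  apply: functional_extensionality => i; congr (stM (u _)).
  by apply: val_inj; rewrite ?lift0 /= /bump ?leq0n /=; have := ltn_ord i; lia.
rewrite r0 rm ft fi.
apply: final_alg; first exact: sign_sq.
move=> k; rewrite -exprD; have := ltn_ord k.
move=> hk; have -> : (n.+1 + k.+1 = (n - k.+1).+1 + (k.+1) * 2)%N by lia.
by rewrite exprD exprM sqrr_sign mulr1.
Qed.

Lemma mod2 {K : fieldType} {V : lmodType K} (a h k : K) (x y z w : V) :
  h *: (a *: x + y) + k *: (a *: z + w) = a *: (h *: x + k *: z) + (h *: y + k *: w).
Proof.
rewrite !scalerDr !scalerA [h * a]mulrC [k * a]mulrC -!scalerA.
by rewrite addrACA.
Qed.

Lemma Sop_comb {K : fieldType} {A M : lmodType K} (st : A -> A) (stM : M -> M) :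
  linear_map st -> forall n (f g : cochain A M n) a b u,
  Sop st stM (fun v => a *: f v + b *: g v) u =
  a *: Sop st stM f u + b *: Sop st stM g u.
Proof.
move=> hst n f g a b u; rewrite /Sop (lin_comb hst) scalerDr !scalerA.
by rewrite [_ * a]mulrC [_ * b]mulrC.
Qed.

Lemma Sop_lin {K : fieldType} {A M : lmodType K} (st : A -> A) (stM : M -> M) :
  linear_map st -> forall n (f g : cochain A M n) a u,
  Sop st stM (fun v => a *: f v + g v) u =
  a *: Sop st stM f u + Sop st stM g u.
Proof.
move=> hst n f g a u; rewrite /Sop hst scalerDr !scalerA.
by rewrite [_ * a]mulrC -scalerA.
Qed.

Lemma Sop0 {K : fieldType} {A M : lmodType K} (st : A -> A) (stM : M -> M) :
  linear_map st -> forall n u, Sop st stM (fun _ : 'I_n -> M => (0 : A)) u = 0.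
Proof. by move=> hst n u; rewrite /Sop (lm0 hst) scaler0. Qed.

Lemma SopK {K : fieldType} {A M : lmodType K} (st : A -> A) (stM : M -> M) :
  linear_map st -> (forall a, st (st a) = a) -> (forall u, stM (stM u) = u) ->
  forall n (f : cochain A M n) u, Sop st stM (Sop st stM f) u = f u.
Proof.
move=> hst hstK hsMK n f u; rewrite /Sop (lmZ hst) hstK scalerA sgnS_sq scale1r.
by congr f; apply: functional_extensionality => i; rewrite rev_ordK hsMK.
Qed.

Lemma ml_comb {K : fieldType} {A M : lmodType K} n (f g : cochain A M n) a b :
  multilinear f -> multilinear g -> multilinear (fun v => a *: f v + b *: g v).
Proof.
move=> hf hg u i c x y; rewrite hf hg !scalerDr !scalerA.
by rewrite [a * c]mulrC [b * c]mulrC -!scalerA addrACA.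
Qed.

Lemma ml0 {K : fieldType} {A M : lmodType K} n :
  multilinear (fun _ : 'I_n -> M => (0 : A)).
Proof. by move=> u i c x y; rewrite scaler0 addr0. Qed.

Lemma Sop_ml {K : fieldType} {A M : lmodType K} (st : A -> A) (stM : M -> M) :
  linear_map st -> linear_map stM ->
  forall n (f : cochain A M n), multilinear f -> multilinear (Sop st stM f).
Proof.
move=> hst hsM n f hf u i a x y; rewrite /Sop.
have E z : (fun j => stM (upd u i z (rev_ord j))) =
           upd (fun j => stM (u (rev_ord j))) (rev_ord i) (stM z).
  apply: functional_extensionality => j; rewrite /upd.
  have -> : (rev_ord j == i) = (j == rev_ord i).
    by rewrite -{1}(rev_ordK i) (inj_eq rev_ord_inj).
  by case: ifP.
rewrite !E hsM hf hst scalerDr !scalerA.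
by rewrite [_ * a]mulrC -scalerA.
Qed.

Lemma dT0 {K : fieldType} {A M : lmodType K} (mul : A -> A -> A)
  (lact : A -> M -> M) (ract : M -> A -> M) (T : M -> A) :
  (forall u, linear_map (lT mul ract T u)) ->
  (forall u, linear_map (fun a => rT mul lact T a u)) ->
  forall n u, dT mul lact ract T (fun _ : 'I_n -> M => (0 : A)) u = 0.
Proof.
move=> hl hr n u; rewrite /dT (lm0 (hl _)) (lm0 (hr _)) big1; last first.
  by move=> k _; rewrite scaler0.
by rewrite !scaler0 !addr0 scaler0.
Qed.

Lemma dT_comb {K : fieldType} {A M : lmodType K} (mul : A -> A -> A)
  (lact : A -> M -> M) (ract : M -> A -> M) (T : M -> A) :
  (forall u, linear_map (lT mul ract T u)) ->
  (forall u, linear_map (fun a => rT mul lact T a u)) ->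
  forall n (f g : cochain A M n) (a b : K) u,
  dT mul lact ract T (fun v => a *: f v + b *: g v) u =
  a *: dT mul lact ract T f u + b *: dT mul lact ract T g u.
Proof.
move=> hl hr n f g a b u; rewrite (dT_lin _ _ _ _ hl hr); congr (_ + _).
have -> : (fun v => b *: g v) = (fun v => b *: g v + (fun _ => 0) v).
  by apply: functional_extensionality => v; rewrite addr0.
by rewrite (dT_lin _ _ _ _ hl hr) (dT0 _ _ _ _ hl hr) addr0.
Qed.

Lemma recon {K : fieldType} {V : lmodType K} (h : K) (x y : V) :
  h + h = 1 -> (h *: x + h *: y) + (h *: x + (- h) *: y) = x.
Proof. by move=> hh; rewrite addrACA -!scalerDl hh addrN scale1r scale0r addr0. Qed.

Lemma proj1_alg {K : fieldType} {V : lmodType K} (h : K) (x y : V) :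
  h + h = 1 -> h *: (1 *: x + 1 *: y) + h *: (1 *: x + 1 *: - y) - x = 0.
Proof.
move=> hh; rewrite !scale1r !scalerDr scalerN addrACA addrN addr0.
by rewrite -scalerDl hh scale1r subrr.
Qed.

Lemma proj2_alg {K : fieldType} {V : lmodType K} (h : K) (x y : V) :
  h + h = 1 -> h *: (1 *: x + 1 *: y) + (- h) *: (1 *: x + 1 *: - y) - y = 0.
Proof.
move=> hh; rewrite !scale1r !scalerDr !scaleNr !scalerN opprK addrACA addrN add0r.
by rewrite -scalerDl hh scale1r subrr.
Qed.

Theorem mainTheorem5 (K : fieldType) (A M : lmodType K)
    (mul : A -> A -> A) (st : A -> A)
    (lact : A -> M -> M) (ract : M -> A -> M) (stM : M -> M) (T : M -> A) :
  (2%:R : K) != 0 ->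
  involutive_assoc_algebra mul st ->
  involutive_bimodule mul st lact ract stM ->
  rel_RB_operator mul st lact ract stM T ->
  forall n : nat,
    cohomology_iso_sum mul lact ract T
      (@HomP K A M) (@iHomP K A M st stM) (@imHomP K A M st stM) n.
Proof.
move=> h2 [hmul [_ [hst [hstK hstm]]]] [hbl [hbr [_ [_ [_ [hsM [hsMK [hsl hsr]]]]]]]].
move=> [hT [hTs _]] n.
have hl := lT_lin _ _ _ hmul hbr hT.
have hr := rT_lin _ _ _ hmul hbl hT.
pose h : K := 2%:R^-1.
have hh : h + h = 1 by rewrite -mulr2n -mulr_natr mulVf.
have Scomb := Sop_comb st stM hst.
have Slin := Sop_lin st stM hst.
have SK := SopK st stM hst hstK hsMK.
have Sml := Sop_ml st stM hst hsM.
have S0 := Sop0 st stM hst.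
have Dcomb := dT_comb _ _ _ _ hl hr.
have D0 := dT0 _ _ _ _ hl hr.
have DS := dT_Sop _ _ _ _ _ _ hst hstm hsM hsMK hsl hsr hTs hl hr.
have Bzero : forall X : forall m, cochain A M m -> Prop,
    (forall m, X m (fun _ => 0)) ->
    coboundary mul lact ract T X (fun _ : 'I_n -> M => 0).
  move=> X hX; case: n => [|m] //=.
  exists (fun _ => 0); split; first exact: hX.
  by apply: functional_extensionality => u; rewrite D0.
have XP : forall m, HomP (fun _ : 'I_m -> M => (0 : A)) by move=> m; exact: ml0.
have XQ : forall m, iHomP st stM (fun _ : 'I_m -> M => (0 : A)).
  move=> m; split; first exact: ml0.
  by apply: functional_extensionality => u; rewrite S0.
have XR : forall m, imHomP st stM (fun _ : 'I_m -> M => (0 : A)).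
  move=> m; split; first exact: ml0.
  by apply: functional_extensionality => u; rewrite S0 oppr0.
have Q1 : forall m (f : cochain A M m), multilinear f ->
    iHomP st stM (fun u => h *: f u + h *: Sop st stM f u).
  move=> m f mf; split; first by apply: ml_comb => //; apply: Sml.
  apply: functional_extensionality => u.
  by rewrite Scomb SK addrC.
have R1 : forall m (f : cochain A M m), multilinear f ->
    imHomP st stM (fun u => h *: f u + (- h) *: Sop st stM f u).
  move=> m f mf; split; first by apply: ml_comb => //; apply: Sml.
  apply: functional_extensionality => u.
  by rewrite Scomb SK opprD -!scaleNr opprK addrC.
exists (fun f => ((fun u => h *: f u + h *: Sop st stM f u),
                 (fun u => h *: f u + (- h) *: Sop st stM f u))).
split; [|split; [|split]].
- move=> a f g _ _ /=; congr pair; apply: functional_extensionality => u;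
    by rewrite Slin mod2.
- move=> f [mf Df] /=; split; split.
  + exact: (Q1 _ _ mf).
  + apply: functional_extensionality => u.
    by rewrite Dcomb DS Df S0 !scaler0 addr0.
  + exact: (R1 _ _ mf).
  + apply: functional_extensionality => u.
    by rewrite Dcomb DS Df S0 !scaler0 addr0.
- move=> f [mf Df]; case: n f mf Df Bzero => [|m] f mf Df _ /=.
  + split.
    * move=> ->; split; apply: functional_extensionality => u;
        by rewrite S0 !scaler0 addr0.
    * move=> [e1 e2]; apply: functional_extensionality => u.
      have := congr1 (fun F => F u) e1; have := congr1 (fun F => F u) e2 => /= E2 E1.
      by rewrite -(recon _ (f u) (Sop st stM f u) hh) E1 E2 addr0.
  + split.
    * move=> [g [mg Dg]]; split.
      - exists (fun u => h *: g u + h *: Sop st stM g u); split; first exact: (Q1 _ _ mg).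
        apply: functional_extensionality => u.
        by rewrite Dcomb DS Dg.
      - exists (fun u => h *: g u + (- h) *: Sop st stM g u); split; first exact: (R1 _ _ mg).
        apply: functional_extensionality => u.
        by rewrite Dcomb DS Dg.
    * move=> [[g1 [[mg1 _] Dg1]] [g2 [[mg2 _] Dg2]]].
      exists (fun u => 1 *: g1 u + 1 *: g2 u); split; first exact: ml_comb.
      apply: functional_extensionality => u.
      have := congr1 (fun F => F u) Dg1; have := congr1 (fun F => F u) Dg2 => /= E2 E1.
      by rewrite Dcomb !scale1r E1 E2 recon.
- move=> g k [[mg Sg] Dg] [[mk Sk] Dk].
  exists (fun u => 1 *: g u + 1 *: k u); split; [split|split].
  + exact: ml_comb.
  + apply: functional_extensionality => u.
    by rewrite Dcomb Dg Dk !scaler0 addr0.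
  + have -> : (fun u => (h *: (1 *: g u + 1 *: k u) + h *: Sop st stM (fun u => 1 *: g u + 1 *: k u) u) - g u) = (fun _ => 0).
      apply: functional_extensionality => u.
      have := congr1 (fun F => F u) Sg; have := congr1 (fun F => F u) Sk => /= E2 E1.
      by rewrite Scomb E1 E2 (proj1_alg _ _ _ hh).
    exact: Bzero.
  + have -> : (fun u => (h *: (1 *: g u + 1 *: k u) + (- h) *: Sop st stM (fun u => 1 *: g u + 1 *: k u) u) - k u) = (fun _ => 0).
      apply: functional_extensionality => u.
      have := congr1 (fun F => F u) Sg; have := congr1 (fun F => F u) Sk => /= E2 E1.
      by rewrite Scomb E1 E2 (proj2_alg _ _ _ hh).
    exact: Bzero.
Qed.
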